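(* With the following design of $F_A(x)=C_A(x)+S_A(x)$ and $F_B(x)=C_B(x)+S_B(x)$ in PolyDot-CMPC, the conditions C1, C2, C3 below are satisfied: $$F_A(x)=\begin{cases}F_{A_1}(x), & z>ts-t \text{ and } s,t\neq 1\\ F_{A_2}(x), & z\le ts-t \text{ or } t=1 \text{ or } s=1\end{cases}$$ $$F_{A_1}(x)=\underbrace{\sum_{i=0}^{t-1}\sum_{j=0}^{s-1}A_{i,j}x^{i+tj}}_{C_A(x)}+\sum_{w=0}^{ts-t-1}\sum_{l=0}^{p-1}\bar A_{(w+\theta' l)}x^{ts+\theta' l+w}+\sum_{u=0}^{z-1-pt(s-1)}\bar A_{(u+t(s-1)+\theta'(p-1))}x^{ts+\theta' p+u},$$ $$F_{A_2}(x)=\sum_{i=0}^{t-1}\sum_{j=0}^{s-1}A_{i,j}x^{i+tj}+\sum_{u=0}^{z-1}\bar A_u x^{ts+\theta' p+u},$$ $$F_B(x)=\begin{cases}F_{B_1}(x), & z>\tau \text{ or } t=1 \text{ or } s=1\\ F_{B_2}(x), & \frac{\tau+1}{2}<z\le\tau \text{ and } s,t\neq1\\ F_{B_3}(x), & z\le\frac{\tau+1}{2} \text{ and } s,t\neq 1\end{cases}$$ $$F_{B_1}(x)=\underbrace{\sum_{k=0}^{s-1}\sum_{l=0}^{t-1}B_{k,l}x^{t(s-1-k)+\theta' l}}_{C_B(x)}+\sum_{r=0}^{z-1}\bar B_r x^{ts+\theta'(t-1)+r},$$ $$F_{B_2}(x)=C_B(x)+\sum_{d=0}^{\tau-z}\sum_{l'=0}^{p'-1}\bar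 B_{(\theta' l'+d)}x^{ts+\theta' l'+d}+\sum_{v=0}^{z-1-p'(\tau-z+1)}\bar B_{(v+\tau-z+1+\theta'(p'-1))}x^{ts+\theta' p'+v},$$ $$F_{B_3}(x)=C_B(x)+\sum_{v=0}^{z-1}\bar B_v x^{ts+v},$$ where $\theta'=t(2s-1)$, $p=\min\{\lfloor\frac{z-1}{ts-t}\rfloor,t-1\}$, $\tau=\theta'-ts-t$, $p'=\min\{\lfloor\frac{z-1}{\tau-z+1}\rfloor,t-1\}$. The conditions are: for all $i,l\in\{0,\dots,t-1\}$, C1: $i+t(s-1)+tl(2s-1)\notin \mathbf{P}(S_A(x))+\mathbf{P}(C_B(x))$; C2: $i+t(s-1)+tl(2s-1)\notin \mathbf{P}(S_A(x))+\mathbf{P}(S_B(x))$; C3: $i+t(s-1)+tl(2s-1)\notin \mathbf{P}(S_B(x))+\mathbf{P}(C_A(x))$.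
   Context: Two sources hold private matrices $A,B\in\mathbb{F}^{m\times m}$ over a finite field $\mathbb{F}$; the goal is to compute $Y=A^TB$ with help of $N$ workers, $z$ of which may collude. Each matrix is split into $s$ row-wise and $t$ column-wise partitions ($s,t\in\mathbb{N}$, $s|m$, $t|m$, excluding $s=t=1$); $A_{i,j}$ ($i\in\{0,\dots,t-1\}$, $j\in\{0,\dots,s-1\}$) are blocks of $A^T$ and $B_{k,l}$ ($k\in\{0,\dots,s-1\}$, $l\in\{0,\dots,t-1\}$) are blocks of $B$. For a polynomial $f(x)=\sum_i a_ix^i$, $\mathbf{P}(f(x))$ is the set of exponents $i$ with $a_i\neq 0$; for integer sets, $\mathbf{A}+\mathbf{B}=\{a+b: a\in\mathbf{A}, b\in\mathbf{B}\}$. The terms $C_A,C_B$ are the PolyDot coded terms and $S_A,S_B$ the secret terms; the exponents $i+t(s-1)+tl(2s-1)$, $i,l\in\{0,\dots,t-1\}$, are the ''important powers'' of $C_A(x)C_B(x)$, whose coefficients $\sum_{j}A_{i,j}B_{j,l}$ form $Y$. The coefficients $\bar A_{(\cdot)}$ are chosen independently and uniformly at random in $\mathbb{F}^{\frac{m}{t}\times\frac{m}{s}}$, and $\bar B_{(\cdot)}$ independently and uniformly at random in $\mathbb{F}^{\frac{m}{s}\times\frac{m}{t}}$. *)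

(* Defs.v *)
From HB Require Import structures.
From mathcomp Require Import all_boot all_order all_algebra.
Set Implicit Arguments. Unset Strict Implicit. Unset Printing Implicit Defensive.
Import GRing.Theory.

(* A polynomial with (rectangular) matrix coefficients is represented by its
   coefficient function  nat -> coefficient ; f e is the coefficient of x^e. *)

Definition term (R : zmodType) (k : nat) (M : R) (e : nat) : R :=
  if e == k then M else 0%R.

Definition supp (R : zmodType) (f : nat -> R) (e : nat) : Prop := f e != 0%R.

Definition sumset (P Q : nat -> Prop) (e : nat) : Prop :=
  exists a b, [/\ P a, Q b & (a + b)%N = e].

(* entry (x,y) of M, or 0 if out of range *)
Definition mget (R : zmodType) (m n : nat) (M : 'M[R]_(m, n)) (x y : nat) : R :=
  match (insub x : option 'I_m), (insub y : option 'I_n) with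
  | Some x', Some y' => M x' y'
  | _, _ => 0%R
  end.

Definition blk (R : zmodType) (m n r c : nat) (M : 'M[R]_(m, n)) (i j : nat)
  : 'M[R]_(r, c) := \matrix_(a < r, b < c) mget M (i * r + a) (j * c + b).

Definition Ablk (R : zmodType) (m s t : nat) (A : 'M[R]_m) (i j : nat) :=
  blk (m %/ t) (m %/ s) (trmx A) i j.
Definition Bblk (R : zmodType) (m s t : nat) (B : 'M[R]_m) (k l : nat) :=
  blk (m %/ s) (m %/ t) B k l.

Definition theta' (s t : nat) : nat := t * (2 * s - 1).
(* p = min(floor((z-1)/(ts-t)), t-1); when ts - t = 0 (s = 1) the quotient is
   read as +infinity, so p = t-1 *)
Definition pA (s t z : nat) : nat :=
  if (t * s - t == 0)%N then (t - 1)%N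
  else minn ((z - 1) %/ (t * s - t)) (t - 1).
(* tau = theta' - ts - t (only used, and exact, when s >= 2) *)
Definition tau (s t : nat) : nat := (theta' s t - t * s - t)%N.
Definition pB (s t z : nat) : nat :=
  minn ((z - 1) %/ (tau s t - z + 1)) (t - 1).

Definition CA (R : zmodType) (m s t : nat) (A : 'M[R]_m) (e : nat) :=
  (\sum_(i < t) \sum_(j < s) term (i + t * j)%N (Ablk s t A i j) e)%R.
Definition CB (R : zmodType) (m s t : nat) (B : 'M[R]_m) (e : nat) :=
  (\sum_(k < s) \sum_(l < t)
      term (t * (s - 1 - k) + theta' s t * l)%N (Bblk s t B k l) e)%R.

Definition SA1 (R : zmodType) (s t z : nat) (Abar : nat -> R) (e : nat) : R :=
  let th := theta' s t in let p := pA s t z in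
  (\sum_(w < (t * s - t)%N) \sum_(l < p)
       term (t * s + th * l + w)%N (Abar (w + th * l)%N) e
   + \sum_(u < (z - p * t * (s - 1))%N)
       term (t * s + th * p + u)%N (Abar (u + t * (s - 1) + th * (p - 1))%N) e)%R.
Definition SA2 (R : zmodType) (s t z : nat) (Abar : nat -> R) (e : nat) : R :=
  (\sum_(u < z) term (t * s + theta' s t * pA s t z + u)%N (Abar u) e)%R.
Definition SA (R : zmodType) (s t z : nat) (Abar : nat -> R) : nat -> R :=
  if [&& (t * s - t < z)%N, s != 1%N & t != 1%N] then SA1 s t z Abar
  else SA2 s t z Abar.

Definition SB1 (R : zmodType) (s t z : nat) (Bbar : nat -> R) (e : nat) : R :=
  (\sum_(r < z) term (t * s + theta' s t * (t - 1) + r)%N (Bbar r) e)%R.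
Definition SB2 (R : zmodType) (s t z : nat) (Bbar : nat -> R) (e : nat) : R :=
  let th := theta' s t in let p' := pB s t z in let ta := tau s t in
  (\sum_(d < (ta - z + 1)%N) \sum_(l' < p')
       term (t * s + th * l' + d)%N (Bbar (th * l' + d)%N) e
   + \sum_(v < (z - p' * (ta - z + 1))%N)
       term (t * s + th * p' + v)%N (Bbar (v + ta - z + 1 + th * (p' - 1))%N) e)%R.
Definition SB3 (R : zmodType) (s t z : nat) (Bbar : nat -> R) (e : nat) : R :=
  (\sum_(v < z) term (t * s + v)%N (Bbar v) e)%R.

Definition SB (R : zmodType) (s t z : nat) (Bbar : nat -> R) : nat -> R :=
  if [|| (tau s t < z)%N, s == 1%N | t == 1%N] then SB1 s t z Bbar
  else if (tau s t + 1 < 2 * z)%N then SB2 s t z Bbar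
  else SB3 s t z Bbar.

Definition FA (R : zmodType) (m s t z : nat) (A : 'M[R]_m)
  (Abar : nat -> 'M[R]_(m %/ t, m %/ s)) (e : nat) := (CA s t A e + SA s t z Abar e)%R.
Definition FB (R : zmodType) (m s t z : nat) (B : 'M[R]_m)
  (Bbar : nat -> 'M[R]_(m %/ s, m %/ t)) (e : nat) := (CB s t B e + SB s t z Bbar e)%R.

Definition imp_pow (s t i l : nat) : nat := (i + t * (s - 1) + t * l * (2 * s - 1))%N.

(* Main.v *)
Require Import Defs.
From HB Require Import structures.
From mathcomp Require Import all_boot all_order all_algebra.
From mathcomp Require Import zify.
Set Implicit Arguments. Unset Strict Implicit. Unset Printing Implicit Defensive.
Import GRing.Theory.

Lemma sum_nz (R : zmodType) n (f : 'I_n -> R) :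
  (\sum_(i < n) f i != 0)%R -> exists i, (f i != 0)%R.
Proof.
move=> H; case: (boolP [exists i, f i != 0%R]) => [/existsP //|/existsPn H0].
by rewrite big1 ?eqxx in H => // i _; apply/eqP; move: (H0 i); rewrite negbK.
Qed.

Lemma add_nz (R : zmodType) (a b : R) : (a + b != 0)%R -> (a != 0)%R \/ (b != 0)%R.
Proof.
case: (eqVneq a 0%R) => [->|]; last by left.
by rewrite add0r; right.
Qed.

Lemma term_nz (R : zmodType) k (M : R) e : (term k M e != 0)%R -> e = k.
Proof. rewrite /term; case: (eqVneq e k) => // _. by rewrite eqxx. Qed.

Lemma key th Q l X Y : th * Q + X = th * l + Y -> Y < th -> X < th + Y -> X = Y.
Proof.
move=> E HY HX; case: (ltngtP Q l) => H.
- have : th * Q + th <= th * l by rewrite addnC -mulnS leq_mul2l H orbT.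
  lia.
- have : th * l + th <= th * Q by rewrite addnC -mulnS leq_mul2l H orbT.
  lia.
- subst; lia.
Qed.

Lemma th_eq s t : theta' s t = 2 * (t * s) - t.
Proof. by rewrite /theta' mulnBr muln1 mulnCA. Qed.

Lemma ts2 s t : 1 < s -> t * 2 <= t * s.
Proof. by move=> h; rewrite leq_mul2l h orbT. Qed.

Lemma SA_cls (R : zmodType) s t z (Abar : nat -> R) e : 0 < s -> 0 < t ->
  supp (SA s t z Abar) e ->
  t * s + theta' s t * (t - 1) <= e \/
  [/\ 1 < s, 1 < t & exists q w, [/\ e = t * s + theta' s t * q + w, w < t * s - t & w < z]].
Proof.
move=> s0 t0; rewrite /supp /SA.
case: ifP => [/and3P [Hz Hs Ht] | Hc] H.
- have s1 : 1 < s by lia.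
  have t1 : 1 < t by lia.
  have hts := ts2 t s1.
  rewrite /SA1 /= in H; case/add_nz: H => H.
  + have [w /sum_nz [l /term_nz ->]] := sum_nz H.
    right; split => //; exists l, w; split => //; have := ltn_ord w; lia.
  + have [u /term_nz ->] := sum_nz H.
    have Hp : pA s t z = minn ((z-1) %/ (t*s-t)) (t-1).
      by rewrite /pA ifF //; lia.
    have Eu : pA s t z * t * (s - 1) = pA s t z * (t * s - t).
      by rewrite -mulnA mulnBr muln1.
    have Hu0 : u < z - pA s t z * (t * s - t) by rewrite -Eu.
    move: Hu0.
    move: Hp; set p := pA s t z => Hp.
    have D0 : 0 < t * s - t by lia.
    have := ltn_ceil (z-1) D0.
    case: (leqP ((z-1) %/ (t*s-t)) (t-1)) => Hm.
    * move/minn_idPl: (Hm) => Hm'. rewrite Hm' in Hp; rewrite -Hp => Hc Hu.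
      right; split => //; exists p, u; clear Hp Hm Hm' H; move: Hc Hu; rewrite mulSn; move: (nat_of_ord u) (p * (t * s - t)) (t * s - t) => x y D; clear; split => //; lia.
    * rewrite (minn_idPr (ltnW Hm)) in Hp; move=> _ _; left; have : theta' s t * (t-1) <= theta' s t * p by rewrite Hp. lia.
- have [u /term_nz ->] := sum_nz H.
  case: (eqVneq s 1) => [s1|s1].
  + left; have -> : pA s t z = t - 1 by rewrite /pA s1 muln1 subnn.
    lia.
  case: (eqVneq t 1) => [t1|t1].
  + left; rewrite t1 subnn muln0; lia.
  have s2 : 1 < s by lia.
  have t2 : 1 < t by lia.
  have hts := ts2 t s2.
  have Hz : z <= t * s - t by move: Hc; rewrite s1 t1 !andbT; lia.
  have -> : pA s t z = 0.
    by rewrite /pA ifF; [rewrite divn_small ?min0n //|]; lia.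
  have Hu := ltn_ord u.
  right; split => //; exists 0, u; split; [rewrite muln0 addn0 //| |]; lia.
Qed.

Lemma SB_cls (R : zmodType) s t z (Bbar : nat -> R) e : 0 < s -> 0 < t ->
  supp (SB s t z Bbar) e ->
  t * s + theta' s t * (t - 1) <= e \/
  [/\ 1 < s, 1 < t & exists q d, e = t * s + theta' s t * q + d /\ d + z <= tau s t].
Proof.
move=> s0 t0; rewrite /supp /SB.
case: ifP => [_ | Hc] H.
  have [u /term_nz ->] := sum_nz H; left; lia.
move/negbT: Hc; rewrite !negb_or => /and3P [Hz Hs Ht].
have s1 : 1 < s by lia.
have t1 : 1 < t by lia.
rewrite -leqNgt in Hz.
case: ifP => [Hz2 | Hz2] in H.
- rewrite /SB2 /= in H; case/add_nz: H => H.
  + have [w /sum_nz [l /term_nz ->]] := sum_nz H.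
    right; split => //; exists l, w; split => //; have := ltn_ord w; lia.
  + have [u /term_nz ->] := sum_nz H.
    have Hp : pB s t z = minn ((z-1) %/ (tau s t - z + 1)) (t-1) by [].
    move: Hp; set p := pB s t z => Hp.
    have D0 : 0 < tau s t - z + 1 by lia.
    have := ltn_ceil (z-1) D0.
    case: (leqP ((z-1) %/ (tau s t - z + 1)) (t-1)) => Hm.
    * move/minn_idPl: (Hm) => Hm'. rewrite Hm' in Hp; rewrite -Hp => Hc2.
      have Hu : u < z - p * (tau s t - z + 1) := ltn_ord u.
      right; split => //; exists p, u; clear Hp Hm Hm' H; move: Hz Hc2 Hu; rewrite mulSn.
      move: (nat_of_ord u) => x; clear.
      move: (p * (tau s t - z + 1)) (tau s t) => y D; split => //; lia.
    * rewrite (minn_idPr (ltnW Hm)) in Hp; move=> _; left.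
      have : theta' s t * (t-1) <= theta' s t * p by rewrite Hp.
      lia.
- have [u /term_nz ->] := sum_nz H.
  have Hu := ltn_ord u.
  right; split => //; exists 0, u; split; [rewrite muln0 addn0 //|]; lia.
Qed.

Lemma CA_cls (R : zmodType) m s t (A : 'M[R]_m) e : 0 < s ->
  supp (CA s t A) e -> e < t * s.
Proof.
move=> s0; rewrite /supp /CA => H.
have [i /sum_nz [j /term_nz ->]] := sum_nz H.
have Hi := ltn_ord i; have Hj : j <= s - 1 by have := ltn_ord j; lia.
have : t * j <= t * (s - 1) by rewrite leq_mul2l Hj orbT.
have : t <= t * s by rewrite leq_pmulr. rewrite mulnBr muln1; lia.
Qed.

Lemma CB_cls (R : zmodType) m s t (B : 'M[R]_m) e :
  supp (CB s t B) e -> exists c q, e = c + theta' s t * q /\ c <= t * s - t.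
Proof.
rewrite /supp /CB => H.
have [k /sum_nz [l /term_nz ->]] := sum_nz H.
exists (t * (s - 1 - k)), l; split => //.
have -> : t * s - t = t * (s - 1) by rewrite mulnBr muln1.
rewrite leq_mul2l; apply/orP; right; lia.
Qed.

Lemma imp_eq s t i l : 0 < s ->
  imp_pow s t i l = i + (t * s - t) + theta' s t * l.
Proof. by move=> s0; rewrite /imp_pow /theta' mulnBr muln1 mulnAC. Qed.

Theorem theorem1 (F : finFieldType) (m s t z : nat) (A B : 'M[F]_m)
  (Abar : nat -> 'M[F]_(m %/ t, m %/ s)) (Bbar : nat -> 'M[F]_(m %/ s, m %/ t)) :
  (0 < s)%N -> (0 < t)%N -> (s %| m)%N -> (t %| m)%N -> ~ (s = 1%N /\ t = 1%N) ->
  forall i l : nat, (i < t)%N -> (l < t)%N ->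
  [/\ ~ sumset (supp (SA s t z Abar)) (supp (CB s t B)) (imp_pow s t i l),
      ~ sumset (supp (SA s t z Abar)) (supp (SB s t z Bbar)) (imp_pow s t i l) &
      ~ sumset (supp (SB s t z Bbar)) (supp (CA s t A)) (imp_pow s t i l)].
Proof.
move=> s0 t0 _ _ _ i l Hi Hl.
have ht : t <= t * s by rewrite leq_pmulr.
have Eth := th_eq s t.
have Eimp := imp_eq t i l s0.
have Hl' : theta' s t * l <= theta' s t * (t - 1).
  by rewrite leq_mul2l; apply/orP; right; lia.
split.
- move=> [x [y [Hx Hy]]]; rewrite Eimp => Hxy.
  case: (SA_cls s0 t0 Hx) => // [Hb | [s1 t1 [q [w [Ex Hw Hwz]]]]]; first lia.
  have [c [q2 [Ey Hc]]] := CB_cls Hy.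
  have hts := ts2 t s1.
  have E : theta' s t * (q + q2) + (t * s + w + c) = theta' s t * l + (i + (t * s - t)).
    by rewrite mulnDr; lia.
  have := key E; lia.
- move=> [x [y [Hx Hy]]]; rewrite Eimp => Hxy.
  case: (SA_cls s0 t0 Hx) => // [Hb | [s1 t1 [q [w [Ex Hw Hwz]]]]]; first lia.
  case: (SB_cls s0 t0 Hy) => // [Hb | [_ _ [q2 [d [Ey Hd]]]]]; first lia.
  have hts := ts2 t s1.
  rewrite /tau in Hd.
  have E : theta' s t * (q + q2) + (2 * (t * s) + w + d) = theta' s t * l + (i + (t * s - t)).
    by rewrite mulnDr; lia.
  have := key E; lia.
- move=> [x [y [Hx Hy]]]; rewrite Eimp => Hxy.
  have Hy' := CA_cls s0 Hy.
  case: (SB_cls s0 t0 Hx) => // [Hb | [s1 t1 [q [d [Ex Hd]]]]]; first lia.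
  have hts := ts2 t s1.
  rewrite /tau in Hd.
  have E : theta' s t * q + (t * s + d + y) = theta' s t * l + (i + (t * s - t)).
    by lia.
  have := key E; lia.
Qed.
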